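(* Let $x:\mathbb{R}\to\mathbb{R}$ be a $2\Omega$-bandlimited signal with $|x(t)|\le c_{\max}<\infty$. Suppose $x$ is sampled by an IF-TEM with parameters $b_{\mathrm{IF}}>c_{\max}$, $\kappa>0$, $\delta>0$, and by an AIF-TEM with the same parameters $\kappa,\delta$ and a MAP block operating successfully with some $\beta>0$. If the AIF-TEM biases satisfy $b_n\le b_{\mathrm{IF}}$ for all $n$, then $f_{s_a}\le f_{s_c}$ and $OS_a\le OS_c$.
   Context: A signal $x$ is $2\Omega$-bandlimited if its Fourier transform vanishes outside $[-\Omega,\Omega]$. An IF-TEM with parameters $b_{\mathrm{IF}},\kappa,\delta$ produces strictly increasing firing times $t_n$ with $\frac1\kappa\int_{t_{n-1}}^{t_n}(x(s)+b_{\mathrm{IF}})ds=\delta$. An AIF-TEM with parameters $\kappa,\delta$ and window size $w$ produces strictly increasing firing times $t_n$ and biases $b_n>0$ with $\frac1\kappa\int_{t_{n-1}}^{t_n}(x(s)+b_n)ds=\delta$; with $c_n=\max_{t_{n-w}\le t\le t_n}|x(t)|$, the MAP block operates successfully if $b_n\ge c_n+\beta$ for all $n$. For either sampler, $T_n=t_n-t_{n-1}$, the average sampling frequency is $f_s=1/\mathbb{E}[T_n]$ where $\mathbb{E}$ is the average over the samples, and the average oversampling is $OS=f_s\cdot\pi/\Omega$; the subscripts $a$ and $c$ refer to the AIF-TEM and IF-TEM respectively. *)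

(* Defs.v *)
From HB Require Import structures.
From mathcomp Require Import all_boot all_order all_algebra.
From mathcomp Require Import all_classical all_reals all_analysis.
Set Implicit Arguments. Unset Strict Implicit. Unset Printing Implicit Defensive.
Import Order.TTheory GRing.Theory Num.Theory.
Import numFieldNormedType.Exports.
Local Open Scope classical_set_scope.
Local Open Scope ring_scope.

Section TEM.
Variable R : realType.
Local Notation mu := (@lebesgue_measure R).

Definition test_outside (W : R) (psi : R -> R) : Prop :=
  (forall (k : nat) (t : R), derivable (derive1n k psi) t 1) /\
  (exists M : R, forall w, M <= `|w| -> psi w = 0) /\
  (exists e : R, 0 < e /\ forall w, `|w| <= W + e -> psi w = 0).

(* x is 2W-bandlimited: its (distributional) Fourier transform vanishes
   outside [-W, W], i.e. <x^, psi> = <x, psi^> = 0 for every test function psi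
   supported outside [-W, W]; psi^(t) = int psi(w) (cos(wt) - i sin(wt)) dw,
   and both real and imaginary parts are written out. *)
Definition bandlimited (W : R) (x : R -> R) : Prop :=
  measurable_fun setT x /\
  forall psi, test_outside W psi ->
    (\int[mu]_(t in setT) (x t * \int[mu]_(w in setT) (psi w * cos (w * t))) = 0) /\
    (\int[mu]_(t in setT) (x t * \int[mu]_(w in setT) (psi w * sin (w * t))) = 0).

Definition IF_TEM (x : R -> R) (bIF kappa delta : R) (t : nat -> R) : Prop :=
  (forall n, t n < t n.+1) /\
  (forall n, kappa^-1 * \int[mu]_(s in `[t n, t n.+1]) (x s + bIF) = delta).

(* AIF-TEM: firing times t_n and biases b_n > 0 (n >= 1) with
   (1/kappa) int_{t_{n-1}}^{t_n} (x(s) + b_n) ds = delta. *)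
Definition AIF_TEM (x : R -> R) (kappa delta : R) (t b : nat -> R) : Prop :=
  (forall n, t n < t n.+1) /\
  (forall n, 0 < b n.+1) /\
  (forall n, kappa^-1 * \int[mu]_(s in `[t n, t n.+1]) (x s + b n.+1) = delta).

(* MAP block operates successfully with window w and margin beta:
   b_n >= c_n + beta where c_n = max_{t_{n-w} <= s <= t_n} |x(s)|
   (indices below 0 are truncated to 0), for all n >= 1. *)
Definition MAP_success (x : R -> R) (w : nat) (beta : R) (t b : nat -> R) : Prop :=
  forall n, (0 < n)%N ->
    forall s, t (n - w)%N <= s <= t n -> `|x s| + beta <= b n.

Definition avgT (t : nat -> R) (N : nat) : R :=
  (\sum_(1 <= n < N.+1) (t n - t n.-1)) / N%:R.

Definition fs (t : nat -> R) (N : nat) : R := (avgT t N)^-1.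

Definition OS (W : R) (t : nat -> R) (N : nat) : R := fs t N * pi / W.

End TEM.

(* Main.v *)
Require Import Defs.
From HB Require Import structures.
From mathcomp Require Import all_boot all_order all_algebra.
From mathcomp Require Import all_classical all_reals all_analysis.
From mathcomp Require Import lra.
Import Order.TTheory GRing.Theory Num.Theory.
Import numFieldNormedType.Exports.
Local Open Scope classical_set_scope.
Local Open Scope ring_scope.

Section H.
Variable R : realType.
Local Notation mu := (@lebesgue_measure R).

Lemma integ_itv (x : R -> R) cmax c (a b : R) (i : interval R) :
  measurable_fun setT x -> (forall s, `|x s| <= cmax) ->
  [set` i] `<=` `[a, b]%classic ->
  mu.-integrable [set` i] (EFin \o (fun s => x s + c)).
Proof.
move=> mx bx sub.
apply: (@integrableS _ _ _ mu `[a, b]%classic) => //.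
apply: measurable_bounded_integrable => //.
- have H := (@lebesgue_measure_itv R `[a, b]%R). set m := (X in (X < _)%E); have -> : m = _ := H; rewrite /=; case: ifP => _; last by rewrite ltry.
  by rewrite -EFinD ltry.
- apply: measurable_funS (measurable_realfun.measurable_funD mx (measurable_cst c)) => //.
- exists (cmax + `|c|); split; first by rewrite num_real.
  move=> M HM s _ /=.
  apply: le_trans (ltW HM).
  by apply: le_trans (ler_normD _ _) _; rewrite lerD2r.
Qed.

Lemma avgT_tele (t : nat -> R) N : (0 < N)%N -> avgT t N = (t N - t 0%N) / N%:R.
Proof.
move=> N0; rewrite /avgT; congr (_ / _).
rewrite big_add1 /=.
rewrite (eq_bigr (fun k => t k.+1 - t k)) //.
by rewrite telescope_sumr.
Qed.


Lemma integ_gen (f : R -> R) M (a b : R) (i : interval R) :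
  measurable_fun setT f -> (forall s, `|f s| <= M) ->
  [set` i] `<=` `[a, b]%classic ->
  mu.-integrable [set` i] (EFin \o f).
Proof.
move=> mx bx sub.
have := @integ_itv f M 0 a b i mx bx sub.
by apply: eq_integrable => // s _ /=; rewrite addr0.
Qed.

Lemma mu_itv_oc (a b : R) : a <= b -> fine (mu `]a, b]%classic) = b - a.
Proof.
move=> ab.
have H := (@lebesgue_measure_itv R `]a, b]%R).
set m := (X in fine X); have -> : m = _ := H; rewrite /=.
case: ifP => [_|]; first by [].
rewrite lte_fin => /negbT; rewrite -leNgt => ba.
have -> : b = a by apply/eqP; rewrite eq_le ab ba.
by rewrite subrr.
Qed.

Lemma tc_le_ta (cmax bIF kappa delta : R)
  (x : R -> R) (tc ta b : nat -> R) :
  measurable_fun setT x ->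
  (forall s, `|x s| <= cmax) ->
  cmax < bIF -> 0 < kappa ->
  IF_TEM x bIF kappa delta tc ->
  AIF_TEM x kappa delta ta b ->
  (forall n, b n <= bIF) ->
  ta 0%N = tc 0%N -> forall n, tc n <= ta n.
Proof.
move=> mx bx cb k0 [tcinc tceq] [tainc [_ taeq]] bb t0.
elim=> [|n IH]; first by rewrite t0.
rewrite leNgt; apply/negP => H.
set c0 := tc n in IH *; set c1 := tc n.+1 in H *.
set a0 := ta n in IH *; set a1 := ta n.+1 in H *.
have a01 : a0 < a1 by exact: tainc.
have c01 : c0 < c1 by exact: tcinc.
pose g := fun s => x s + bIF.
have mg : measurable_fun setT g.
  exact: (measurable_realfun.measurable_funD mx (measurable_cst _)).
have bg : forall s, `|g s| <= cmax + `|bIF|.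
  move=> s; apply: le_trans (ler_normD _ _) _; by rewrite lerD2r.
have gpos : forall s, bIF - cmax <= g s.
  move=> s; rewrite /g; have := bx s; rewrite ler_norml => /andP[h _]; lra.
have Ec := tceq n; have Ea := taeq n.
rewrite -/c0 -/c1 in Ec; rewrite -/a0 -/a1 in Ea.
have Ic_Ia : \int[mu]_(s in `[c0, c1]) g s = \int[mu]_(s in `[a0, a1]) (x s + b n.+1).
  have : kappa^-1 * \int[mu]_(s in `[c0, c1]) g s = kappa^-1 * \int[mu]_(s in `[a0, a1]) (x s + b n.+1).
    by rewrite Ec Ea.
  by move/mulfI; apply; rewrite invr_neq0 // gt_eqF.
have int1 : forall (i : interval R), [set` i] `<=` `[c0, c1]%classic ->
    mu.-integrable [set` i] (EFin \o g).
  by move=> i si; apply: integ_gen mg bg si.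
have S1 : \int[mu]_(s in `[c0, c1]) g s - \int[mu]_(s in `[c0, a0]) g s
        = \int[mu]_(s in `[a0, c1]) g s.
  rewrite Rintegral_itvB ?bnd_simp; [|exact: int1|exact: IH|].
    rewrite Rintegral_itv_obnd_cbnd //; apply: int1.
    by apply: subset_itvScc; rewrite bnd_simp // ltW.
  by rewrite ltW // (le_lt_trans _ H) // ltW.
have S2 : \int[mu]_(s in `[a0, c1]) g s - \int[mu]_(s in `[a0, a1]) g s
        = \int[mu]_(s in `]a1, c1]) g s.
  rewrite Rintegral_itvB ?bnd_simp //; [|exact: ltW|exact: ltW].
  apply: int1; apply: subset_itvScc; rewrite bnd_simp //.
have P1 : 0 <= \int[mu]_(s in `[c0, a0]) g s.
  apply: Rintegral_ge0 => s _; apply: le_trans (gpos s); lra.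
have P2 : (bIF - cmax) * (c1 - a1) <= \int[mu]_(s in `]a1, c1]) g s.
  have <- : \int[mu]_(s in `]a1, c1]) (bIF - cmax) = (bIF - cmax) * (c1 - a1).
    by rewrite Rintegral_cst // mu_itv_oc // ltW.
  apply: le_Rintegral => //.
  - apply: (@integ_gen _ `|bIF - cmax| c0 c1) => //.
    by apply: subset_itvScc; rewrite bnd_simp // ltW // (le_lt_trans IH) // (lt_trans a01).
  - apply: int1; apply: subset_itvScc; rewrite bnd_simp // ltW // (le_lt_trans IH) // (lt_trans a01).
have P3 : \int[mu]_(s in `[a0, a1]) (x s + b n.+1) <= \int[mu]_(s in `[a0, a1]) g s.
  apply: le_Rintegral => //.
  - exact: (@integ_itv x cmax (b n.+1) a0 a1 `[a0, a1] mx bx (@subset_refl _ _)).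
  - exact: (@integ_itv x cmax bIF a0 a1 `[a0, a1] mx bx (@subset_refl _ _)).
  - by move=> s _; rewrite /g lerD2l.
have P4 : 0 < (bIF - cmax) * (c1 - a1) by apply: mulr_gt0; rewrite subr_gt0.
move: P1 P2 P3 P4 S1 S2 Ic_Ia.
set A := \int[mu]_(s in `[c0, c1]) g s.
set B := \int[mu]_(s in `[c0, a0]) g s.
set C := \int[mu]_(s in `[a0, c1]) g s.
set D := \int[mu]_(s in `[a0, a1]) g s.
set E := \int[mu]_(s in `]a1, c1]) g s.
set F := \int[mu]_(s in `[a0, a1]) (x s + b n.+1).
set P := (bIF - cmax) * (c1 - a1).
move=> *; lra.
Qed.

End H.

Lemma inc_pos (R : realType) (t : nat -> R) : (forall n, t n < t n.+1) -> forall n, t 0%N < t n.+1.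
Proof. move=> h; elim=> [|n IH] //; exact: lt_trans IH (h _). Qed.

Theorem theorem4 (R : realType) (W cmax bIF kappa delta beta : R) (w : nat)
  (x : R -> R) (tc ta b : nat -> R) (N : nat) :
  0 < W -> bandlimited W x ->
  (forall s, `|x s| <= cmax) ->
  cmax < bIF -> 0 < kappa -> 0 < delta -> 0 < beta ->
  IF_TEM x bIF kappa delta tc ->
  AIF_TEM x kappa delta ta b ->
  MAP_success x w beta ta b ->
  (forall n, b n <= bIF) ->
  ta 0%N = tc 0%N ->
  (0 < N)%N ->
  fs ta N <= fs tc N /\ OS W ta N <= OS W tc N.
Proof.
move=> W0 [mx _] bx cb k0 d0 b0 hc ha _ bb t0 N0.
have le := @tc_le_ta R _ _ _ _ _ _ _ _ mx bx cb k0 hc ha bb t0.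
have hfs : fs ta N <= fs tc N.
  rewrite /fs !avgT_tele //.
  have Np : 0 < (N%:R : R) by rewrite ltr0n.
  have pc : 0 < tc N - tc 0%N.
    by case: N N0 {Np} => // n _; rewrite subr_gt0; apply: inc_pos; case: hc.
  have pa : 0 < ta N - ta 0%N by rewrite t0; apply: lt_le_trans pc _; rewrite lerD2r.
  rewrite lef_pV2 ?posrE ?divr_gt0 //.
  by apply: ler_wpM2r; [rewrite invr_ge0 ltW | rewrite t0 lerD2r].
split => //.
rewrite /OS; apply: ler_wpM2r; first by rewrite invr_ge0 ltW.
by apply: ler_wpM2r => //; exact: pi_ge0.
Qed.
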